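(* (Dual SDP upper bound for the $\ell_\infty$-FGL of two-layer networks.) Let $W\in\mathbb{R}^{n\times m}$, $u\in\mathbb{R}^{1\times n}$ and real numbers $a\le b$. Suppose $\zeta\in\mathbb{R}$, $\lambda\in\mathbb{R}^n_+$, $\tau\in\mathbb{R}^m_+$ are such that, with $T_1=\mathrm{diag}(\lambda)$ and $T_2=\mathrm{diag}(\tau)$, the $(1+m+n)\times(1+m+n)$ block matrix satisfies $$\begin{pmatrix}\sum_{j=1}^m\tau_j-\zeta& 0& u\\ 0& -2ab\,W^TT_1W-T_2& (a+b)W^TT_1\\ u^T& (a+b)T_1W& -2T_1\end{pmatrix}\preceq0 .$$ Then $$\frac{\zeta}{2}\;\ge\;\max_{y\in[a,b]^n}\big\|W^T\mathrm{diag}(y)u^T\big\|_1 .$$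
   Context: $\mathrm{diag}(v)$ is the diagonal matrix with diagonal $v$; $P\preceq0$ means $-P$ is positive semidefinite; $\mathbb{R}_+=[0,\infty)$. For ReLU ($a=0,b=1$) the right-hand side is at least the $\ell_\infty$ formal global Lipschitz constant $\max_{y\in\{0,1\}^n}\|W^T\mathrm{diag}(y)u^T\|_1$ of $x\mapsto u\,\mathrm{ReLU}(Wx)$. *)

(* Defs.v *)
From HB Require Import structures.
From mathcomp Require Export all_boot all_order all_algebra.
Set Implicit Arguments. Unset Strict Implicit. Unset Printing Implicit Defensive.
Import Order.TTheory GRing.Theory Num.Theory.
Local Open Scope ring_scope.

Definition psd (R : realFieldType) (k : nat) (P : 'M[R]_k) : Prop :=
  forall x : 'cV[R]_k, 0 <= (x^T *m P *m x) 0 0.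

Definition nsd (R : realFieldType) (k : nat) (P : 'M[R]_k) : Prop := psd (- P).

Definition l1norm (R : realFieldType) (k : nat) (v : 'cV[R]_k) : R :=
  \sum_(j < k) `|v j 0|.

Definition dual_block (R : realFieldType) (n m : nat)
  (W : 'M[R]_(n, m)) (u : 'rV[R]_n) (a b zeta : R)
  (lambda : 'rV[R]_n) (tau : 'rV[R]_m) : 'M[R]_(1 + m + n) :=
  let T1 := diag_mx lambda in
  let T2 := diag_mx tau in
  block_mx
    (block_mx ((\sum_(j < m) tau 0 j - zeta)%:M : 'M[R]_1) 0
              0 (- (2 * a * b) *: (W^T *m T1 *m W) - T2))
    (col_mx u ((a + b) *: (W^T *m T1)))
    (row_mx u^T ((a + b) *: (T1 *m W)))
    (- 2%:R *: T1).

(* Main.v *)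
Require Import Defs.
From HB Require Import structures.
From mathcomp Require Import all_boot all_order all_algebra ring lra.
Import Order.TTheory GRing.Theory Num.Theory.
Local Open Scope ring_scope.

Lemma dq (R : realFieldType) k (p q : 'cV[R]_k) (d : 'rV[R]_k) :
  (p^T *m diag_mx d *m q) 0 0 = \sum_i d 0 i * p i 0 * q i 0.
Proof.
rewrite mxE; apply: eq_bigr => i _; rewrite mul_mx_diag !mxE; ring.
Qed.

Lemma vq (R : realFieldType) k (p : 'rV[R]_k) (q : 'cV[R]_k) :
  (p *m q) 0 0 = \sum_i p 0 i * q i 0.
Proof. by rewrite mxE. Qed.

Lemma addE (R : realFieldType) k l (A B : 'M[R]_(k,l)) i j : (A + B) i j = A i j + B i j.
Proof. by rewrite mxE. Qed.
Lemma oppE (R : realFieldType) k l (A : 'M[R]_(k,l)) i j : (- A) i j = - A i j.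
Proof. by rewrite mxE. Qed.
Lemma scaleE (R : realFieldType) k l c (A : 'M[R]_(k,l)) i j : (c *: A) i j = c * A i j.
Proof. by rewrite mxE. Qed.
Lemma sclE (R : realFieldType) (c : R) : (c%:M : 'M_1) 0 0 = c.
Proof. by rewrite mxE mulr1n. Qed.
Lemma trE (R : realFieldType) k l (A : 'M[R]_(k,l)) i j : (A^T) i j = A j i.
Proof. by rewrite mxE. Qed.

Section S.
Variables (R : realFieldType) (n m : nat)
  (W : 'M[R]_(n, m)) (u : 'rV[R]_n) (a b : R) 
  (zeta : R) (lambda : 'rV[R]_n) (tau : 'rV[R]_m).
Lemma expand (v : 'cV[R]_m) (p w : 'cV[R]_n) (hp : W *m v = p) :
  let x := col_mx (col_mx 1 v) w in
  (x^T *m dual_block W u a b zeta lambda tau *m x) 0 0 =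
  \sum_(j < m) tau 0 j - zeta + \sum_i u 0 i * w i 0 +
  (- (2 * a * b) * \sum_i lambda 0 i * p i 0 * p i 0 -
   \sum_i tau 0 i * v i 0 * v i 0 +
   (a + b) * \sum_i lambda 0 i * w i 0 * p i 0) +
  (\sum_i u 0 i * w i 0 + (a + b) * \sum_i lambda 0 i * p i 0 * w i 0 +
   -2 * \sum_i lambda 0 i * w i 0 * w i 0).
Proof.
rewrite /= /dual_block !tr_col_mx. set M := block_mx _ _ _ _. rewrite (mul_row_block (row_mx 1^T v^T) w^T (block_mx _ _ _ _)).
rewrite mul_row_block mul_mx_row mul_row_col !mul_row_col !mulmx0 ?mul0mx ?addr0 ?add0r.
rewrite add_row_mx mul_row_col.
rewrite !(mulmxDl, mulmxDr, mulmxBl, mulmxBr, mulmxA, trmx1, mulmx1, mul1mx, mulNmx, mulmxN).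
rewrite -!(scalemxAl, scalemxAr) !mulmxA.
have hpt : v^T *m W^T = p^T by rewrite -hp trmx_mul.
rewrite hpt -!(mulmxA _ W v) !hp.
have -> : w^T *m u^T = (u *m w)^T by rewrite trmx_mul.
rewrite !(addE, oppE, scaleE, sclE, trE) !dq !vq.
by [].
Qed.
End S.

Theorem mainTheorem9 (R : realFieldType) (n m : nat)
  (W : 'M[R]_(n, m)) (u : 'rV[R]_n) (a b : R) (hab : a <= b)
  (zeta : R) (lambda : 'rV[R]_n) (tau : 'rV[R]_m)
  (hlambda : forall i, 0 <= lambda 0 i) (htau : forall j, 0 <= tau 0 j)
  (hnsd : nsd (dual_block W u a b zeta lambda tau)) :
  forall y : 'rV[R]_n, (forall i, a <= y 0 i <= b) ->
    l1norm (W^T *m diag_mx y *m u^T) <= zeta / 2.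
Proof.
move=> y hy.
set g := W^T *m diag_mx y *m u^T.
pose v : 'cV[R]_m := \col_j (if 0 <= g j 0 then 1 else -1).
pose p := W *m v.
pose w : 'cV[R]_n := \col_i (y 0 i * p i 0).
have := hnsd (col_mx (col_mx 1 v) w).
rewrite mulmxN mulNmx oppE (@expand _ _ _ W u a b zeta lambda tau v p w (erefl p)) oppr_ge0.
have hT : \sum_i tau 0 i * v i 0 * v i 0 = \sum_(j < m) tau 0 j.
  apply: eq_bigr => j _; rewrite mxE; case: ifP => _; ring.
have hL : - (2 * a * b) * \sum_i lambda 0 i * p i 0 * p i 0
   + (a + b) * \sum_i lambda 0 i * w i 0 * p i 0
   + (a + b) * \sum_i lambda 0 i * p i 0 * w i 0
   - 2 * \sum_i lambda 0 i * w i 0 * w i 0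
   = \sum_i lambda 0 i * (2 * (y 0 i - a) * (b - y 0 i) * (p i 0 ^+ 2)).
  rewrite !mulr_sumr -sumrN -!big_split /=; apply: eq_bigr => i _.
  have -> : w i 0 = y 0 i * p i 0 by rewrite mxE.
  ring.
have hL0 : 0 <= \sum_i lambda 0 i * (2 * (y 0 i - a) * (b - y 0 i) * (p i 0 ^+ 2)).
  apply: sumr_ge0 => i _; apply: mulr_ge0 => //; apply: mulr_ge0; last exact: sqr_ge0.
  case/andP: (hy i) => h1 h2.
  by apply: mulr_ge0; [apply: mulr_ge0 => //; rewrite subr_ge0|rewrite subr_ge0].
have hU : \sum_i u 0 i * w i 0 = l1norm g.
  rewrite /l1norm.
  have -> : \sum_(j < m) `|g j 0| = \sum_(j < m) v j 0 * g j 0.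
    apply: eq_bigr => j _; rewrite [v j 0]mxE; case: ifP => h.
      by rewrite mul1r ger0_norm.
    by rewrite mulN1r ltr0_norm // ltNge h.
  transitivity (\sum_i \sum_j u 0 i * (y 0 i * (W i j * v j 0))).
    by apply: eq_bigr => i _; rewrite !mxE !mulr_sumr.
  rewrite exchange_big /=; apply: eq_bigr => j _; rewrite [g j 0]mxE mulr_sumr.
  apply: eq_bigr => i _; rewrite mul_mx_diag !mxE; ring.
rewrite hT hU => H.
lra.
Qed.
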